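(* Let $\mathcal T$ be a good triangulation of $\mathcal C_G$ and $S\in\mathcal T$ a maximal simplex. Then every connected component of the graph $(V,D(S))$ (including components consisting of a single node) contains exactly one selected node, i.e. exactly one node of $V(S)$.
   Context: For a finite undirected multigraph $G=(V,E)$ (loops, parallel edges and isolated nodes allowed) with $n=|V|$, $m=|E|$, work in $\mathbb{R}^V\times\mathbb{R}^E\cong\mathbb{R}^{n+m}$ with standard basis vectors $e_u$ ($u\in V$), $e_f$ ($f\in E$). Fix for each edge $f$ an ordering $(u,v)$ of its endpoints ($u=v$ for a loop) and set $\widetilde e_f=e_u+e_v-e_f$, $\overleftarrow e_f=e_u-e_v+e_f$, $\overrightarrow e_f=-e_u+e_v+e_f$ (so for a loop $\overleftarrow e_f=\overrightarrow e_f=e_f$). The cosmological polytope $\mathcal C_G$ is the convex hull of $\{e_f,\widetilde e_f,\overleftarrow e_f,\overrightarrow e_f: f\in E\}\cup\{e_u: u\in V\}$; these are exactly its lattice points, and it is an $(n+m-1)$-dimensional polytope in the hyperplane $\sum_i x_i=1$. A good triangulation of $\mathcal C_G$ is a regular triangulation (induced by a height function on the lattice points of $\mathcal C_G$) whose vertex set is the set of all lattice points of $\mathcal C_G$ and which contains the standard simplex $\mathrm{conv}\{e_u,e_f: u\in V, f\in E\}$ as a maximal cell; simplices are identified with their vertex sets. For a simplex $S\in\mathcal T$: the selected nodes are $V(S)=\{u\in V: e_u\in S\}$; the squiggly edges $\widetilde E(S)=\{f:\widetilde e_f\in S\}$; the selected edges $\widehat E(S)=\{f: e_f\in S\}$;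 for non-loop edges $f$, $f\in\overleftarrow E(S)$ iff $\overleftarrow e_f\in S$ and $f\in\overrightarrow E(S)$ iff $\overrightarrow e_f\in S$ (loops are never in $\overleftarrow E(S)\cup\overrightarrow E(S)$); the double edges are $D(S)=(\overleftarrow E(S)\cup\overrightarrow E(S))\cap\widehat E(S)$. *)

(* Defs.v *)
From HB Require Import structures.
From mathcomp Require Import all_boot all_order all_algebra.
Set Implicit Arguments. Unset Strict Implicit. Unset Printing Implicit Defensive.
Import Order.TTheory GRing.Theory Num.Theory.
Local Open Scope ring_scope.

(* A finite multigraph: nodes V, edges E, and for each edge a fixed ordering
   (u,v) of its endpoints (u = v for a loop).  Ambient space R^V x R^E is
   modelled as {ffun (V + E) -> R^o} (a vectType over R). *)
Section Cosmo.
Variables (R : realFieldType) (V E : finType) (ends : E -> V * V).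

Definition coord := (V + E)%type.
Definition pt := {ffun coord -> R^o}.

Definition ebasis (i : coord) : pt := [ffun j => ((j == i)%:R : R^o)].
Definition e_node (u : V) : pt := ebasis (inl u).
Definition e_edge (f : E) : pt := ebasis (inr f).
Definition e_til (f : E) : pt :=
  e_node (ends f).1 + e_node (ends f).2 - e_edge f.
Definition e_left (f : E) : pt :=
  e_node (ends f).1 - e_node (ends f).2 + e_edge f.
Definition e_right (f : E) : pt :=
  - e_node (ends f).1 + e_node (ends f).2 + e_edge f.

Definition is_loop (f : E) : bool := (ends f).1 == (ends f).2.

Definition lattice_pts : seq pt :=
  undup ([seq e_node u | u : V] ++
         flatten [seq [:: e_edge f; e_til f; e_left f; e_right f] | f : E]).

Definition dotp (c p : pt) : R := \sum_(i : coord) (c i : R) * (p i : R).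

(* Regular subdivision induced by a height function w: a cell is the set of
   lattice points whose lifts lie on a lower face of the lifted configuration.
   As all points lie in the hyperplane sum x_i = 1, affine functionals on it
   are linear functionals c. *)
Definition lower_face (w : pt -> R) (c : pt) : Prop :=
  forall p, p \in lattice_pts -> dotp c p <= w p.

Definition cell_pts (w : pt -> R) (c : pt) : seq pt :=
  [seq p <- lattice_pts | dotp c p == w p].

Definition is_cell (w : pt -> R) (S : seq pt) : Prop :=
  exists2 c, lower_face w c & S =i cell_pts w c.

(* w induces a triangulation: every cell is a simplex (its points are
   affinely, equivalently linearly, independent). *)
Definition induces_triangulation (w : pt -> R) : Prop :=
  forall S, is_cell w S -> uniq S -> free S.

Definition uses_all_points (w : pt -> R) : Prop :=
  forall p, p \in lattice_pts -> exists2 S, is_cell w S & p \in S.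

Definition std_simplex : seq pt := [seq ebasis i | i : coord].

Definition maximal_cell (w : pt -> R) (S : seq pt) : Prop :=
  is_cell w S /\ forall S', is_cell w S' -> {subset S <= S'} -> {subset S' <= S}.

Definition good_height (w : pt -> R) : Prop :=
  [/\ induces_triangulation w, uses_all_points w & maximal_cell w std_simplex].

Definition sel_nodes (S : seq pt) : {set V} := [set u | e_node u \in S].
Definition sel_edges (S : seq pt) : {set E} := [set f | e_edge f \in S].
Definition left_edges (S : seq pt) : {set E} :=
  [set f | ~~ is_loop f & e_left f \in S].
Definition right_edges (S : seq pt) : {set E} :=
  [set f | ~~ is_loop f & e_right f \in S].
Definition double_edges (S : seq pt) : {set E} :=
  (left_edges S :|: right_edges S) :&: sel_edges S.

Definition D_adj (S : seq pt) : rel V := fun x y =>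
  [exists f, (f \in double_edges S) &&
     ((ends f == (x, y)) || (ends f == (y, x)))].

End Cosmo.

(* Main.v *)
Require Import Defs.
From HB Require Import structures.
From mathcomp Require Import all_boot all_order all_algebra.
From mathcomp Require Import lra.
Import Order.TTheory GRing.Theory Num.Theory.
Local Open Scope ring_scope.

Lemma dotpD (R : realFieldType) (V E : finType) (c p q : pt R V E) :
  dotp c (p + q) = dotp c p + dotp c q.
Proof. rewrite /dotp -big_split /=; apply: eq_bigr => i _; by rewrite ffunE mulrDr. Qed.

Lemma dotpN (R : realFieldType) (V E : finType) (c p : pt R V E) :
  dotp c (- p) = - dotp c p.
Proof. rewrite /dotp -sumrN; apply: eq_bigr => i _; by rewrite ffunE mulrN. Qed.

Lemma dotpB (R : realFieldType) (V E : finType) (c p q : pt R V E) :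
  dotp c (p - q) = dotp c p - dotp c q.
Proof. by rewrite dotpD dotpN. Qed.

Lemma dotp_basis (R : realFieldType) (V E : finType) (c : pt R V E) i :
  dotp c (ebasis R i) = c i.
Proof.
rewrite /dotp (bigD1 i) //= big1 ?addr0; first by rewrite ffunE eqxx mulr1.
by move=> j /negbTE Hj; rewrite ffunE Hj mulr0.
Qed.

Lemma dotp_lin (R : realFieldType) (V E : finType) (c d p : pt R V E) (t : R) :
  dotp [ffun j => c j + t * d j] p = dotp c p + t * dotp d p.
Proof.
rewrite /dotp mulr_sumr -big_split /=; apply: eq_bigr => i _.
by rewrite ffunE mulrDl mulrA.
Qed.

Lemma dotp_opp (R : realFieldType) (V E : finType) (d p : pt R V E) :
  dotp [ffun j => - d j] p = - dotp d p.
Proof. rewrite /dotp -sumrN; apply: eq_bigr => i _; by rewrite ffunE mulNr. Qed.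


Lemma dotp_til (R : realFieldType) (V E : finType) (ends : E -> V * V) (c : pt R V E) f :
  dotp c (e_til R ends f) = c (inl (ends f).1) + c (inl (ends f).2) - c (inr f).
Proof. by rewrite /e_til /e_node /e_edge dotpB dotpD !dotp_basis. Qed.

Lemma dotp_left (R : realFieldType) (V E : finType) (ends : E -> V * V) (c : pt R V E) f :
  dotp c (e_left R ends f) = c (inl (ends f).1) - c (inl (ends f).2) + c (inr f).
Proof. by rewrite /e_left /e_node /e_edge dotpD dotpB !dotp_basis. Qed.

Lemma dotp_right (R : realFieldType) (V E : finType) (ends : E -> V * V) (c : pt R V E) f :
  dotp c (e_right R ends f) = - c (inl (ends f).1) + c (inl (ends f).2) + c (inr f).
Proof. by rewrite /e_right /e_node /e_edge !dotpD dotpN !dotp_basis. Qed.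

Lemma dotp_node (R : realFieldType) (V E : finType) (c : pt R V E) u :
  dotp c (e_node R E u) = c (inl u).
Proof. exact: dotp_basis. Qed.

Lemma dotp_edge (R : realFieldType) (V E : finType) (c : pt R V E) f :
  dotp c (e_edge R V f) = c (inr f).
Proof. exact: dotp_basis. Qed.

Lemma til_coord (R : realFieldType) (V E : finType) (ends : E -> V * V) f :
  e_til R ends f (inr f) = -1.
Proof. by rewrite /e_til /e_node /e_edge /ebasis !ffunE /= eqxx add0r sub0r. Qed.

Lemma left_coord (R : realFieldType) (V E : finType) (ends : E -> V * V) f :
  ~~ is_loop ends f -> e_left R ends f (inl (ends f).2) = -1.
Proof.
rewrite /is_loop => H.
rewrite /e_left /e_node /e_edge /ebasis !ffunE /= eqxx.
have -> : (inl (ends f).2 == inl (ends f).1 :> Defs.coord V E) = false.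
  by apply/eqP => -[E']; rewrite E' eqxx in H.
rewrite /=; lra.
Qed.

Lemma edge_coord1 (R : realFieldType) (V E : finType) (ends : E -> V * V) f :
  [/\ e_edge R V f (inr f) = 1, e_left R ends f (inr f) = 1 & e_right R ends f (inr f) = 1].
Proof.
rewrite /e_left /e_right /e_node /e_edge /ebasis !ffunE /= !eqxx /=.
split => //; rewrite ?oppr0; lra.
Qed.

Lemma node_coord (R : realFieldType) (V E : finType) u (f : E) :
  @e_node R V E u (inr f) = 0.
Proof. by rewrite /e_node /ebasis ffunE. Qed.

Lemma not_std (R : realFieldType) (V E : finType) (p : pt R V E) j :
  p j = -1 -> p \notin std_simplex R V E.
Proof.
move=> Hp; apply/negP => /imageP [i _ Hi].
move: Hp; rewrite Hi /ebasis ffunE; case: (j == i) => /=; lra.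
Qed.

Lemma lat_node (R : realFieldType) (V E : finType) (ends : E -> V * V) u :
  e_node R E u \in lattice_pts R ends.
Proof. by rewrite /lattice_pts mem_undup mem_cat image_f. Qed.

Lemma lat_edge_pts (R : realFieldType) (V E : finType) (ends : E -> V * V) f :
  [/\ e_edge R V f \in lattice_pts R ends, e_til R ends f \in lattice_pts R ends,
      e_left R ends f \in lattice_pts R ends & e_right R ends f \in lattice_pts R ends].
Proof.
have H : forall p, p \in [:: e_edge R V f; e_til R ends f; e_left R ends f; e_right R ends f] ->
   p \in lattice_pts R ends.
  move=> p Hp; rewrite /lattice_pts mem_undup mem_cat; apply/orP; right.
  apply/flatten_mapP; exists f => //; exact: mem_enum.
by split; apply: H; rewrite !inE eqxx ?orbT.
Qed.

Lemma lat_basis (R : realFieldType) (V E : finType) (ends : E -> V * V) i :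
  ebasis R i \in lattice_pts R ends.
Proof. case: i => [u|f]; [exact: lat_node | by case: (lat_edge_pts R V E ends f)]. Qed.

Lemma lat_cases (R : realFieldType) (V E : finType) (ends : E -> V * V) p :
  p \in lattice_pts R ends ->
  (exists u, p = e_node R E u) \/ exists f,
   [\/ p = e_edge R V f, p = e_til R ends f, p = e_left R ends f | p = e_right R ends f].
Proof.
rewrite /lattice_pts mem_undup mem_cat => /orP [/imageP [u _ ->] | ].
  by left; exists u.
move/flatten_mapP => [f _]; rewrite !inE => /or4P H; right; exists f.
by case: H => /eqP ->; [constructor 1|constructor 2|constructor 3|constructor 4].
Qed.

Lemma std_basis (R : realFieldType) (V E : finType) i :
  ebasis R i \in std_simplex R V E.
Proof. exact: image_f. Qed.

Lemma seq_argmin (R : realFieldType) (T : eqType) (s : seq T) (P : pred T) (F : T -> R) :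
  has P s -> exists2 x, (x \in s) && P x & forall y, y \in s -> P y -> F x <= F y.
Proof.
elim: s => [//|y s IH] /=.
case Hs: (has P s).
  have [x /andP[xs Px] Hx] := IH Hs => _.
  case Py: (P y); last first.
    exists x; first by rewrite inE xs orbT Px.
    move=> z; rewrite inE => /orP [/eqP -> | zs] Pz; [by rewrite Pz in Py | exact: Hx].
  case: (leP (F y) (F x)) => H.
    exists y; first by rewrite inE eqxx Py.
    move=> z; rewrite inE => /orP[/eqP->|zs] Pz //; exact: le_trans H (Hx _ zs Pz).
  exists x; first by rewrite inE xs orbT Px.
  move=> z; rewrite inE => /orP[/eqP->|zs] Pz; [exact: ltW | exact: Hx].
rewrite orbF => Py; exists y; first by rewrite inE eqxx Py.
move=> z; rewrite inE => /orP[/eqP->|zs] Pz //.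
have : has P s by apply/hasP; exists z.
by rewrite Hs.
Qed.

Lemma span_pos (R : realFieldType) (V E : finType) (ends : E -> V * V)
    (w : pt R V E -> R) (S : seq (pt R V E)) (c : pt R V E) :
  lower_face ends w c -> S =i cell_pts ends w c ->
  (forall S', is_cell ends w S' -> {subset S <= S'} -> {subset S' <= S}) ->
  forall d : pt R V E, (forall p, p \in S -> dotp d p = 0) ->
  forall p0, p0 \in lattice_pts R ends -> 0 < dotp d p0 -> False.
Proof.
move=> Hc HS Hmax d Hd p0 Hp0 Hdp0.
have := @seq_argmin R _ (lattice_pts R ends) (fun p => 0 < dotp d p)
   (fun p => (w p - dotp c p) / dotp d p).
case=> [|x /andP[xl Px] Hx]; first by apply/hasP; exists p0.
set t := (w x - dotp c x) / dotp d x.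
have t0 : 0 <= t by rewrite divr_ge0 // ?subr_ge0 ?Hc // ltW.
set c' : pt R V E := [ffun j => c j + t * d j].
have Hc' : forall p, dotp c' p = dotp c p + t * dotp d p by move=> p; exact: dotp_lin.
have lf : lower_face ends w c'.
  move=> p pl; rewrite Hc'; case: (leP (dotp d p) 0) => H.
    have : t * dotp d p <= 0 by rewrite mulr_ge0_le0.
    have := Hc p pl; lra.
  have := Hx p pl H; rewrite ler_pdivlMr // -/t => h; lra.
have cell' : is_cell ends w (cell_pts ends w c') by exists c'.
have sub : {subset S <= cell_pts ends w c'}.
  move=> p pS; have := pS; rewrite HS mem_filter => /andP[/eqP e pl].
  by rewrite mem_filter pl Hc' Hd // mulr0 addr0 e eqxx.
have xin : x \in cell_pts ends w c'.
  rewrite mem_filter xl Hc' andbT /t divfK; last by rewrite gt_eqF. apply/eqP; lra.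
have xS := Hmax _ cell' sub x xin.
by move: Px; rewrite Hd // ltxx.
Qed.

Lemma span_zero (R : realFieldType) (V E : finType) (ends : E -> V * V)
    (w : pt R V E -> R) (S : seq (pt R V E)) (c : pt R V E) :
  lower_face ends w c -> S =i cell_pts ends w c ->
  (forall S', is_cell ends w S' -> {subset S <= S'} -> {subset S' <= S}) ->
  forall d : pt R V E, (forall p, p \in S -> dotp d p = 0) -> forall i, d i = 0.
Proof.
move=> Hc HS Hmax d Hd i.
have [H|H|//] := ltrgtP (d i) 0.
  exfalso; apply: (@span_pos R V E ends w S c Hc HS Hmax [ffun j => - d j] _ (ebasis R i) (lat_basis R V E ends i)).
    by move=> p pS; rewrite dotp_opp Hd // oppr0.
  by rewrite dotp_opp dotp_basis oppr_gt0.
exfalso; apply: (@span_pos R V E ends w S c Hc HS Hmax d Hd (ebasis R i) (lat_basis R V E ends i)).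
by rewrite dotp_basis.
Qed.

Definition bR (R : realFieldType) (b : bool) : R := if b then 1 else 0.

Definition dfE (R : realFieldType) (Kx Ky tS lS rS : bool) : R :=
  if Kx && Ky then 2 * bR R tS
  else if Kx then bR R tS - bR R lS + bR R rS
  else if Ky then bR R tS + bR R lS - bR R rS else 0.

Lemma edge_arith (R : realFieldType) (Kx Ky tS lS rS eS : bool) :
  ~~ (tS && eS) -> ~~ (tS && lS) -> ~~ (tS && rS) -> (Kx != Ky -> ~~ (lS && rS)) ->
  (Kx -> ~~ Ky -> eS -> ~~ (lS || rS)) -> (Ky -> ~~ Kx -> eS -> ~~ (lS || rS)) ->
  [/\ eS -> dfE R Kx Ky tS lS rS = 0,
      tS -> bR R Kx + bR R Ky - dfE R Kx Ky tS lS rS = 0,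
      lS -> bR R Kx - bR R Ky + dfE R Kx Ky tS lS rS = 0 &
      rS -> - bR R Kx + bR R Ky + dfE R Kx Ky tS lS rS = 0].
Proof.
rewrite /dfE /bR.
by case: Kx; case: Ky; case: tS; case: lS; case: rS; case: eS => //= *;
  split => // _; lra.
Qed.

Lemma node_inj (R : realFieldType) (V E : finType) (a b : V) :
  @e_node R V E a = e_node R E b -> a = b.
Proof.
move=> H; have := congr1 (fun p : pt R V E => p (inl a)) H.
rewrite /e_node /ebasis !ffunE eqxx /=.
have [//|ne] := eqVneq a b.
have -> : (inl a == inl b :> (V + E)%type) = false.
  by apply/eqP => -[]; apply/eqP.
rewrite /= => h; exfalso; clear H; lra.
Qed.

Theorem mainTheorem3 (R : realFieldType) (V E : finType) (ends : E -> V * V)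
    (w : pt R V E -> R) (S : seq (pt R V E)) :
  good_height ends w ->
  maximal_cell ends w S ->
  forall u : V,
    #|[set x | connect (D_adj ends S) u x & x \in sel_nodes S]| = 1%N.
Proof.
move=> [Htri _ [[c0 Hc0 Hstd] _]] [[c Hc HS] Hmax] u.
have HSt : forall p, p \in S -> dotp c p = w p /\ p \in lattice_pts R ends.
  by move=> p; rewrite HS mem_filter => /andP[/eqP -> ->].
have Hb : forall i, dotp c0 (ebasis R i) = w (ebasis R i).
  by move=> i; have := std_basis R V E i; rewrite Hstd mem_filter => /andP[/eqP -> _].
have Hci : forall i, c i <= c0 i.
  move=> i; rewrite -(dotp_basis _ _ _ c) -(dotp_basis _ _ _ c0) Hb.
  exact: Hc (lat_basis R V E ends i).
have Hweak : forall p, p \in S -> dotp c0 p <= dotp c p.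
  by move=> p pS; have [-> pl] := HSt p pS; exact: Hc0.
have Hstrict : forall p j, p \in S -> p j = -1 -> dotp c0 p < dotp c p.
  move=> p j pS pj; have [e pl] := HSt p pS.
  have : p \notin cell_pts ends w c0 by rewrite -Hstd; exact: not_std pj.
  rewrite mem_filter pl andbT e => H.
  by rewrite lt_def eq_sym H Hc0.
have exTE : forall f, e_til R ends f \in S -> e_edge R V f \in S -> False.
  move=> f tS eS; have h1 := Hstrict _ _ tS (til_coord R V E ends f).
  have h2 := Hweak _ eS; rewrite !dotp_til in h1; rewrite !dotp_edge in h2.
  have := Hci (inr f); have := Hci (inl (ends f).1); have := Hci (inl (ends f).2).
  lra.
have exTL : forall f, e_til R ends f \in S -> e_left R ends f \in S -> False.
  move=> f tS lS; have h1 := Hstrict _ _ tS (til_coord R V E ends f).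
  have h2 := Hweak _ lS; rewrite !dotp_til in h1; rewrite !dotp_left in h2.
  have := Hci (inl (ends f).1); lra.
have exTR : forall f, e_til R ends f \in S -> e_right R ends f \in S -> False.
  move=> f tS lS; have h1 := Hstrict _ _ tS (til_coord R V E ends f).
  have h2 := Hweak _ lS; rewrite !dotp_til in h1; rewrite !dotp_right in h2.
  have := Hci (inl (ends f).2); lra.
have exLR : forall f, ~~ is_loop ends f -> e_left R ends f \in S -> e_right R ends f \in S -> False.
  move=> f nl lS rS; have h1 := Hstrict _ _ lS (left_coord R V E ends f nl).
  have h2 := Hweak _ rS; rewrite !dotp_left in h1; rewrite !dotp_right in h2.
  have := Hci (inr f); lra.
set C := cell_pts ends w c.
have uC : uniq C by rewrite filter_uniq // undup_uniq.
have fC : free C by apply: Htri uC; exists c.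
set T := [seq p <- C | [forall x, p != e_node R E x]].
have inT : forall p f, p \in S -> p (inr f) = 1 -> p \in T.
  move=> p f pS pf; rewrite mem_filter -HS pS andbT; apply/forallP => x.
  apply/eqP => Ex; move: pf; rewrite Ex node_coord; lra.
have step : forall z y, D_adj ends S z y -> e_node R E z - e_node R E y \in <<T>>%VS.
  move=> z y /existsP [f /andP[Hd He]].
  have [c1 c2 c3] := edge_coord1 R V E ends f.
  move: Hd; rewrite !inE => /andP[/orP[/andP[nl lS]|/andP[nl rS]] eS].
    have Hm : e_left R ends f - e_edge R V f \in <<T>>%VS.
      by rewrite memvB // memv_span // (inT _ f).
    have Heq : e_left R ends f - e_edge R V f = e_node R E (ends f).1 - e_node R E (ends f).2.
      by rewrite /e_left addrK.
    case/orP: He => /eqP Ef; rewrite Ef /= in Heq; first by rewrite -Heq.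
    by rewrite -opprB -Heq memvN.
  have Hm : e_right R ends f - e_edge R V f \in <<T>>%VS.
    by rewrite memvB // memv_span // (inT _ f).
  have Heq : e_right R ends f - e_edge R V f = e_node R E (ends f).2 - e_node R E (ends f).1.
    by rewrite /e_right addrK addrC.
  case/orP: He => /eqP Ef; rewrite Ef /= in Heq; last by rewrite -Heq.
  by rewrite -opprB -Heq memvN.
have reach : forall x, connect (D_adj ends S) u x ->
    e_node R E u - e_node R E x \in <<T>>%VS.
  move=> x /connectP [p Hp ->] {x}.
  suff H : forall p z, e_node R E u - e_node R E z \in <<T>>%VS ->
      path (D_adj ends S) z p -> e_node R E u - e_node R E (last z p) \in <<T>>%VS.
    by apply: H Hp; rewrite subrr mem0v.
  elim=> [//|y q IH] z Hz /= /andP[Hzy Hq]; apply: IH Hq.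
  have -> : e_node R E u - e_node R E y =
      (e_node R E u - e_node R E z) + (e_node R E z - e_node R E y) by rewrite addrA subrK.
  by rewrite memvD // step.
have uniqsel : forall v1 v2, connect (D_adj ends S) u v1 -> connect (D_adj ends S) u v2 ->
    v1 \in sel_nodes S -> v2 \in sel_nodes S -> v1 = v2.
  move=> v1 v2 cv1 cv2 s1 s2; apply/eqP; apply/negPn/negP => neq.
  have H12 : e_node R E v1 - e_node R E v2 \in <<T>>%VS.
    have -> : e_node R E v1 - e_node R E v2 =
       (e_node R E u - e_node R E v2) - (e_node R E u - e_node R E v1).
      by rewrite opprB [RHS]addrC addrA subrK.
    by rewrite memvB // reach.
  have s1C : e_node R E v1 \in C by rewrite -HS; move: s1; rewrite inE.
  have : free (e_node R E v1 :: rem (e_node R E v1) C).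
    by rewrite -(perm_free (perm_to_rem s1C)).
  rewrite free_cons => /andP[/negP Hn _]; apply: Hn.
  have sub : (<<T>> <= <<rem (e_node R E v1) C>>)%VS.
    apply/span_subvP => p; rewrite mem_filter => /andP[/forallP nn pC].
    by apply: memv_span; rewrite (mem_rem_uniq _ uC) inE pC andbT nn.
  have v2r : e_node R E v2 \in rem (e_node R E v1) C.
    rewrite (mem_rem_uniq _ uC) inE -HS; move: s2; rewrite inE => ->; rewrite andbT.
    by apply/negP => /eqP /node_inj Ev; rewrite Ev eqxx in neq.
  move: (subvP sub _ H12) (memv_span v2r).
  set Y := <<rem (e_node R E v1) C>>%VS => Ha Hb'.
  have -> : e_node R E v1 = e_node R E v2 + (e_node R E v1 - e_node R E v2)
    by rewrite addrC subrK.
  exact: memvD.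
case: (pickP [pred x | connect (D_adj ends S) u x && (x \in sel_nodes S)]) =>
    [v /andP[cv sv] | none].
  have -> : [set x | connect (D_adj ends S) u x & x \in sel_nodes S] = [set v].
    apply/setP => x; rewrite !inE; apply/idP/idP => [/andP[cx sx] | /eqP ->].
      apply/eqP; apply: (uniqsel x v cx cv _ sv); by rewrite inE.
    by rewrite cv; move: sv; rewrite inE.
  by rewrite cards1.
exfalso.
set K := connect (D_adj ends S) u.
set d : pt R V E := [ffun i => match i with
   | inl x => bR R (K x)
   | inr f => dfE R (K (ends f).1) (K (ends f).2) (e_til R ends f \in S)
                (e_left R ends f \in S) (e_right R ends f \in S) end].
have Hd : forall p, p \in S -> dotp d p = 0.
  move=> p pS; have [_ pl] := HSt p pS.
  case: (lat_cases _ _ _ _ _ pl) => [[v Ev] | [f Hf]].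
    rewrite Ev dotp_node ffunE /=.
    rewrite /K; have := none v; rewrite /= inE -Ev pS andbT => ->; by [].
  have nlK : K (ends f).1 != K (ends f).2 -> ~~ is_loop ends f.
    by move=> ne; apply/negP => /eqP E'; rewrite E' eqxx in ne.
  have dbl : ~~ is_loop ends f -> e_edge R V f \in S ->
      (e_left R ends f \in S) || (e_right R ends f \in S) -> f \in double_edges ends S.
    by move=> nl eS lr; rewrite !inE nl eS /= andbT.
  have arith := @edge_arith R (K (ends f).1) (K (ends f).2) (e_til R ends f \in S)
    (e_left R ends f \in S) (e_right R ends f \in S) (e_edge R V f \in S).
  case: arith.
  - by apply/negP => /andP[]; exact: exTE.
  - by apply/negP => /andP[]; exact: exTL.
  - by apply/negP => /andP[]; exact: exTR.
  - by move=> ne; apply/negP => /andP[]; apply: exLR; exact: nlK.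
  - move=> kx ky eS; apply/negP => lr; apply: (negP ky).
    have nl : ~~ is_loop ends f by apply: nlK; rewrite kx; exact: ky.
    apply: connect_trans kx (connect1 _); apply/existsP; exists f.
    rewrite dbl //=; apply/orP; left; by case: (ends f).
  - move=> ky kx eS; apply/negP => lr; apply: (negP kx).
    have nl : ~~ is_loop ends f by apply: nlK; rewrite ky; move: kx; case: (K _).
    apply: connect_trans ky (connect1 _); apply/existsP; exists f.
    rewrite dbl //=; apply/orP; right; by case: (ends f).
  move=> A1 A2 A3 A4.
  case: Hf => Ep; rewrite Ep in pS *.
  - by rewrite dotp_edge ffunE /= A1.
  - by rewrite dotp_til !ffunE /= A2.
  - by rewrite dotp_left !ffunE /= A3.
  - by rewrite dotp_right !ffunE /= A4.
have := span_zero _ _ _ _ _ _ _ Hc HS Hmax d Hd (inl u).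
rewrite ffunE /= /bR /K connect0; lra.
Qed.
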